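(* For any positive integer $k$, in $\mathfrak{h}^1_t[[u]]$, $$S_t\left(\frac{1}{1-z_ku}\right)\ast\frac{1}{1+z_ku}=\frac{1}{1-\sum_{i=2}^\infty t^{i-2}(t-1)z_{ik}u^i}.$$
   Context: $t,u$ are commuting variables. $\mathfrak{h}_t=\mathbb{Q}[t]\langle x,y\rangle$ ($1$ = empty word), $\mathfrak{h}^1_t=\mathbb{Q}[t]+\mathfrak{h}_ty$, $z_k=x^{k-1}y$. For $X$ without constant term, $\frac{1}{1-X}=\sum_{n\ge0}X^n$ with concatenation powers; in particular $\frac1{1\mp z_ku}=\sum_n(\pm1)^nz_k^nu^n$. $\sigma_t$ is the algebra automorphism with $\sigma_t(x)=x,\sigma_t(y)=tx+y$ and $S_t$ is the $\mathbb{Q}[t]$-linear map with $S_t(1)=1$, $S_t(wa)=\sigma_t(w)a$ for words $w$ and letters $a$. The harmonic product $\ast$ on $\mathfrak{h}^1_t$ is the $\mathbb{Q}[t]$-bilinear product with $1\ast w=w\ast1=w$ and $z_kw_1\ast z_lw_2=z_k(w_1\ast z_lw_2)+z_l(z_kw_1\ast w_2)+z_{k+l}(w_1\ast w_2)$ for words $w_1,w_2\in\mathfrak{h}^1_t$. Everything extends coefficientwise to power series in $u$. *)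

(* Defs.v *)
From HB Require Import structures.
From mathcomp Require Import all_boot all_order all_algebra.
Set Implicit Arguments. Unset Strict Implicit. Unset Printing Implicit Defensive.
Import GRing.Theory.
Local Open Scope ring_scope.

(* Words in the letters x (= false) and y (= true); 1 = empty word. *)
Definition word := seq bool.

(* Coefficient ring Q[t]; t is the polynomial variable 'X. *)
Definition Qt := {poly rat}.

(* Elements of h_t = Q[t]<x,y> are represented as formal finite Q[t]-linear
   combinations of words (lists of (coefficient, word)); two representatives
   denote the same element iff they have the same coefficient function [nc_coef]. *)
Definition nc := seq (Qt * word).

Definition nc_coef (f : nc) (v : word) : Qt :=
  \sum_(p <- f) (if p.2 == v then p.1 else 0).

Definition nc_zero : nc := [::].
Definition nc_one : nc := [:: (1, [::])].
Definition nc_add (f g : nc) : nc := f ++ g.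
Definition nc_scale (c : Qt) (f : nc) : nc := [seq (c * p.1, p.2) | p <- f].
Definition nc_mul (f g : nc) : nc :=
  [seq (p.1 * q.1, p.2 ++ q.2) | p <- f, q <- g].
Definition nc_word (w : word) : nc := [:: (1, w)].

(* z_k = x^(k-1) y *)
Definition zw (k : nat) : word := rcons (nseq k.-1 false) true.
Definition z (k : nat) : nc := nc_word (zw k).

(* sigma_t : algebra automorphism, x |-> x, y |-> t x + y *)
Definition sigma_letter (a : bool) : nc :=
  if a then [:: ('X, [:: false]); (1, [:: true])] else nc_word [:: false].
Definition sigma_word (w : word) : nc :=
  foldr (fun a acc => nc_mul (sigma_letter a) acc) nc_one w.
(* S_t(1) = 1, S_t(w a) = sigma_t(w) a *)
Definition St_word (w : word) : nc :=
  match rev w with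
  | [::] => nc_one
  | a :: rw => nc_mul (sigma_word (rev rw)) (nc_word [:: a])
  end.
Definition St (f : nc) : nc := flatten [seq nc_scale p.1 (St_word p.2) | p <- f].

(* Harmonic product of words of h^1 (empty or ending in y), as the multiset of
   resulting words; n is fuel (size w1 + size w2 + 1 suffices). Writing
   w1 = z_k w1' (k = i+1, i = index of the first y) and w2 = z_l w2' (l = j+1):
   z_k w1' * z_l w2' = z_k (w1' * z_l w2') + z_l (z_k w1' * w2') + z_(k+l) (w1' * w2'). *)
Fixpoint stuffle (n : nat) (w1 w2 : word) {struct n} : seq word :=
  match n with
  | 0 => [::]
  | n'.+1 =>
    match w1, w2 with
    | [::], _ => [:: w2]
    | _, [::] => [:: w1]
    | _, _ =>
      let i := index true w1 in
      let j := index true w2 in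
      [seq take i.+1 w1 ++ v | v <- stuffle n' (drop i.+1 w1) w2]
      ++ [seq take j.+1 w2 ++ v | v <- stuffle n' w1 (drop j.+1 w2)]
      ++ [seq zw (i + j + 2) ++ v | v <- stuffle n' (drop i.+1 w1) (drop j.+1 w2)]
    end
  end.

Definition harm_word (w1 w2 : word) : seq word :=
  stuffle (size w1 + size w2).+1 w1 w2.

(* Q[t]-bilinear extension of the harmonic product (meaningful on h^1_t) *)
Definition harm (f g : nc) : nc :=
  flatten [seq [seq (p.1 * q.1, v) | v <- harm_word p.2 q.2] | p <- f, q <- g].

(* Power series in u with coefficients in h_t: F m = coefficient of u^m. *)
Definition ser := nat -> nc.

Definition ser_one : ser := fun m => if m == 0%N then nc_one else nc_zero.
Definition ser_prod (op : nc -> nc -> nc) (F G : ser) : ser :=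
  fun m => flatten [seq op (F i) (G (m - i)%N) | i <- iota 0 m.+1].
Definition ser_mul := ser_prod nc_mul.
Definition ser_harm := ser_prod harm.
Definition ser_pow (F : ser) (n : nat) : ser := iter n (ser_mul F) ser_one.
(* 1/(1-F) = sum_n F^n (concatenation powers), for F without constant term:
   only n <= m contributes to the coefficient of u^m. *)
Definition ser_geom (F : ser) : ser :=
  fun m => flatten [seq ser_pow F n m | n <- iota 0 m.+1].
Definition ser_St (F : ser) : ser := fun m => St (F m).

Definition ser_eq (F G : ser) : Prop :=
  forall (m : nat) (v : word), nc_coef (F m) v = nc_coef (G m) v.

(* Main.v *)
Require Import Defs.
From mathcomp Require Import all_boot all_order all_algebra.
From mathcomp Require Import zify.
Import GRing.Theory.
Local Open Scope ring_scope.
Set Implicit Arguments. Unset Strict Implicit. Unset Printing Implicit Defensive.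


Notation coef := nc_coef.

Lemma ncc_nil v : coef [::] v = 0.
Proof. by rewrite /nc_coef big_nil. Qed.

Lemma ncc_cons p f v : coef (p :: f) v = (if p.2 == v then p.1 else 0) + coef f v.
Proof. by rewrite /nc_coef big_cons. Qed.

Lemma ncc_cat f g v : coef (f ++ g) v = coef f v + coef g v.
Proof. by rewrite /nc_coef big_cat. Qed.

Lemma ncc_flatten (I : Type) (s : seq I) (F : I -> nc) v :
  coef (flatten [seq F i | i <- s]) v = \sum_(i <- s) coef (F i) v.
Proof.
elim: s => [|i s IH] /=; first by rewrite big_nil ncc_nil.
by rewrite ncc_cat IH big_cons.
Qed.

Lemma ncc_flat (s : seq nc) v : coef (flatten s) v = \sum_(x <- s) coef x v.
Proof.
elim: s => [|i s IH] /=; first by rewrite big_nil ncc_nil.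
by rewrite ncc_cat IH big_cons.
Qed.

Lemma ncc_scale c f v : coef (nc_scale c f) v = c * coef f v.
Proof.
rewrite /nc_coef /nc_scale big_map mulr_sumr; apply: eq_bigr => p _ /=.
by case: eqP; rewrite ?mulr0.
Qed.

Lemma ncc_mul f g v : coef (nc_mul f g) v =
  \sum_(p <- f) \sum_(q <- g) (if p.2 ++ q.2 == v then p.1 * q.1 else 0).
Proof.
rewrite /nc_coef /nc_mul.
by rewrite big_allpairs_dep.
Qed.

Lemma sum_pick (s : seq word) x (F : word -> Qt) : uniq s -> x \in s ->
  \sum_(w <- s) (if x == w then F w else 0) = F x.
Proof.
move=> us xs; rewrite (big_rem x xs) /= eqxx big1_seq ?addr0 // => w /andP[_ wr].
case: eqP => // exw; subst w; by rewrite mem_rem_uniqF in wr.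
Qed.

Lemma lin_sum_s f (H : word -> Qt) (s : seq word) : uniq s ->
  {subset [seq p.2 | p <- f] <= s} ->
  \sum_(p <- f) p.1 * H p.2 = \sum_(w <- s) coef f w * H w.
Proof.
move=> us sub.
transitivity (\sum_(w <- s) \sum_(p <- f) (if p.2 == w then p.1 * H w else 0)); last first.
  apply: eq_bigr => w _; rewrite /nc_coef mulr_suml; apply: eq_bigr => p _.
  by case: eqP; rewrite ?mul0r.
rewrite exchange_big /=; apply: eq_big_seq => p pf.
rewrite (sum_pick (fun w => p.1 * H w)) //; apply: sub; exact: map_f.
Qed.

Lemma lin_sum_eq f g (H : word -> Qt) : (forall v, coef f v = coef g v) ->
  \sum_(p <- f) p.1 * H p.2 = \sum_(p <- g) p.1 * H p.2.
Proof.
move=> e; set s := undup ([seq p.2 | p <- f] ++ [seq p.2 | p <- g]).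
have us : uniq s by exact: undup_uniq.
rewrite (lin_sum_s H us) ?(lin_sum_s H us); first by apply: eq_bigr => w _; rewrite e.
- by move=> w wf; rewrite mem_undup mem_cat wf orbT.
- by move=> w wf; rewrite mem_undup mem_cat wf.
Qed.

Definition eqc (f g : nc) := forall v, coef f v = coef g v.

Lemma ncc_lin f v : coef f v = \sum_(p <- f) p.1 * (if p.2 == v then 1 else 0).
Proof. by apply: eq_bigr => p _; case: eqP; rewrite ?mulr1 ?mulr0. Qed.

Definition cnt (v w1 w2 : word) : Qt := (count_mem v (harm_word w1 w2))%:R.

Lemma ncc_harm f g v : coef (harm f g) v =
  \sum_(p <- f) \sum_(q <- g) p.1 * q.1 * cnt v p.2 q.2.
Proof.
rewrite /harm ncc_flat big_allpairs_dep /=; apply: eq_bigr => p _.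
apply: eq_bigr => q _; rewrite /cnt /nc_coef big_map.
elim: (harm_word p.2 q.2) => [|w s IH]; first by rewrite big_nil mulr0.
rewrite big_cons IH /= natrD mulrDr; congr (_ + _).
by case: (w == v); rewrite ?mulr1 ?mulr0.
Qed.

Definition hc f g v := coef (harm f g) v.

Lemma hc_eql f f' g v : eqc f f' -> hc f g v = hc f' g v.
Proof.
move=> e; rewrite /hc !ncc_harm.
have h : forall f0, \sum_(p <- f0) \sum_(q <- g) p.1 * q.1 * cnt v p.2 q.2 =
   \sum_(p <- f0) p.1 * (\sum_(q <- g) q.1 * cnt v p.2 q.2).
  by move=> f0; apply: eq_bigr => p _; rewrite mulr_sumr; apply: eq_bigr => q _; rewrite mulrA.
by rewrite !h (lin_sum_eq (fun w => \sum_(q <- g) q.1 * cnt v w q.2) e).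
Qed.

Lemma hc_eqr f g g' v : eqc g g' -> hc f g v = hc f g' v.
Proof.
move=> e; rewrite /hc !ncc_harm.
have h : forall g0, \sum_(p <- f) \sum_(q <- g0) p.1 * q.1 * cnt v p.2 q.2 =
   \sum_(q <- g0) q.1 * (\sum_(p <- f) p.1 * cnt v p.2 q.2).
  move=> g0; rewrite exchange_big; apply: eq_bigr => q _; rewrite mulr_sumr.
  by apply: eq_bigr => p _; rewrite mulrCA mulrA.
by rewrite !h (lin_sum_eq (fun w => \sum_(p <- f) p.1 * cnt v p.2 w) e).
Qed.

Lemma hc_scalel c f g v : hc (nc_scale c f) g v = c * hc f g v.
Proof.
rewrite /hc !ncc_harm /nc_scale big_map mulr_sumr; apply: eq_bigr => p _.
by rewrite mulr_sumr; apply: eq_bigr => q _ /=; rewrite !mulrA.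
Qed.

Lemma hc_scaler c f g v : hc f (nc_scale c g) v = c * hc f g v.
Proof.
rewrite /hc !ncc_harm mulr_sumr; apply: eq_bigr => p _.
rewrite /nc_scale big_map mulr_sumr; apply: eq_bigr => q _ /=.
by rewrite mulrCA !mulrA.
Qed.

Lemma hc_nill g v : hc nc_zero g v = 0.
Proof. by rewrite /hc ncc_harm big_nil. Qed.

Lemma hc_nilr f v : hc f nc_zero v = 0.
Proof. by rewrite /hc ncc_harm big1 // => p _; rewrite big_nil. Qed.

Lemma ncc_St f v : coef (St f) v = \sum_(p <- f) p.1 * coef (St_word p.2) v.
Proof. by rewrite /St ncc_flatten; apply: eq_bigr => p _; rewrite ncc_scale. Qed.


Lemma zw_cat n x : zw n ++ x = nseq n.-1 false ++ true :: x.
Proof. by rewrite /zw cat_rcons. Qed.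

Lemma size_zw n : (0 < n)%N -> size (zw n) = n.
Proof. by case: n => // n _; rewrite /zw size_rcons size_nseq. Qed.

Lemma index_nseq_true m x : index true (nseq m false ++ true :: x) = m.
Proof. by elim: m => //= m ->. Qed.

Lemma index_zw_cat n x : index true (zw n ++ x) = n.-1.
Proof. by rewrite zw_cat index_nseq_true. Qed.

Lemma catzw a b x y : (0 < a)%N -> (0 < b)%N ->
  (zw b ++ x == zw a ++ y) = (b == a) && (x == y).
Proof.
move=> a0 b0; have [<-|ne] := eqVneq b a; first by rewrite eqseq_cat // eqxx.
apply/eqP => e; move: (congr1 (index true) e); rewrite !index_zw_cat => e'.
by move: ne; rewrite -(prednK a0) -(prednK b0) e' eqxx.
Qed.

Lemma zw_inj a b : (0 < a)%N -> (0 < b)%N -> (zw b == zw a) = (b == a).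
Proof. by move=> a0 b0; have := catzw [::] [::] a0 b0; rewrite !cats0 eqxx andbT. Qed.

Lemma split_true w : true \in w ->
  w = zw (index true w).+1 ++ drop (index true w).+1 w.
Proof.
elim: w => // [[]] w IH /=; first by rewrite drop0.
rewrite inE /= => /IH {1}->; by [].
Qed.

Definition pre (a : nat) (w : word) := take a w == zw a.

Lemma pre_zw a b s : (0 < a)%N -> (0 < b)%N -> pre a (zw b ++ s) = (a == b).
Proof.
move=> a0 b0; rewrite /pre; have [->|ne] := eqVneq a b.
  by rewrite take_size_cat ?size_zw ?eqxx.
apply/eqP => e; have := cat_take_drop a (zw b ++ s); rewrite e => /eqP.
by rewrite catzw // (negPf ne).
Qed.

Lemma cat_pre a w v : (0 < a)%N -> (w == zw a ++ v) = pre a w && (drop a w == v).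
Proof.
move=> a0; apply/eqP/andP => [->|[/eqP p /eqP d]].
  by rewrite /pre take_size_cat ?drop_size_cat ?size_zw.
by rewrite -(cat_take_drop a w) p d.
Qed.

Definition good (w : word) := last true w.

Lemma good_cat u w : good u -> good w -> good (u ++ w).
Proof. by rewrite /good last_cat => ->. Qed.

Lemma good_catr u w : w != [::] -> good w -> good (u ++ w).
Proof. by rewrite /good last_cat; case: w. Qed.

Lemma good_zw n : good (zw n).
Proof. by rewrite /good /zw last_rcons. Qed.

Lemma good_has w : good w -> w != [::] -> true \in w.
Proof.
case: w => // x w; rewrite /good /= => g _.
by have := mem_last x w; rewrite g.
Qed.

Lemma good_behead x w : good (x :: w) -> good w.
Proof. by case: w. Qed.

Lemma good_drop n w : good w -> good (drop n w).
Proof.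
elim: w n => [|x w IH] [|n] //= g; apply: IH; exact: good_behead g.
Qed.

Lemma stuffle_fuel n m w1 w2 : (size w1 + size w2 < n)%N -> (size w1 + size w2 < m)%N ->
  stuffle n w1 w2 = stuffle m w1 w2.
Proof.
elim: n m w1 w2 => [|n IH] [|m] w1 w2 //= h1 h2.
case: w1 h1 h2 => [|x1 w1] h1 h2 //; case: w2 h1 h2 => [|x2 w2] h1 h2 //.
set W1 := x1 :: w1; set W2 := x2 :: w2.
have s1 : forall i, (size (drop i.+1 W1) < size W1)%N.
  by move=> i; rewrite size_drop /W1 /=; lia.
have s2 : forall i, (size (drop i.+1 W2) < size W2)%N.
  by move=> i; rewrite size_drop /W2 /=; lia.
move: h1 h2; rewrite -/W1 -/W2 => h1 h2.
rewrite (IH m (drop _ W1) W2) ?(IH m W1 (drop _ W2)) ?(IH m (drop _ W1) (drop _ W2)) //.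
all: try (have := s1 (index true W1)); try (have := s2 (index true W2)); rewrite /W1 /W2 /= in h1 h2 *; lia.
Qed.

Lemma take_true w : true \in w -> take (index true w).+1 w = zw (index true w).+1.
Proof.
move=> h; rewrite {2}(split_true h) take_size_cat // size_zw //.
Qed.

Lemma size_drop_lt (w : word) n : w != [::] -> (size (drop n.+1 w) < size w)%N.
Proof. by case: w => // x w _; rewrite size_drop /=; lia. Qed.

Lemma stuffle_S n w1 w2 : w1 != [::] -> w2 != [::] -> stuffle n.+1 w1 w2 =
      [seq take (index true w1).+1 w1 ++ v | v <- stuffle n (drop (index true w1).+1 w1) w2]
      ++ [seq take (index true w2).+1 w2 ++ v | v <- stuffle n w1 (drop (index true w2).+1 w2)]
      ++ [seq zw (index true w1 + index true w2 + 2) ++ v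
           | v <- stuffle n (drop (index true w1).+1 w1) (drop (index true w2).+1 w2)].
Proof. by case: w1 => // ? ?; case: w2. Qed.

Lemma stuffle_hw n w1 w2 : (size w1 + size w2 < n)%N -> stuffle n w1 w2 = harm_word w1 w2.
Proof. by move=> h; apply: stuffle_fuel. Qed.

Lemma hw_unfold w1 w2 : true \in w1 -> true \in w2 ->
  harm_word w1 w2 =
    [seq zw (index true w1).+1 ++ v | v <- harm_word (drop (index true w1).+1 w1) w2]
    ++ [seq zw (index true w2).+1 ++ v | v <- harm_word w1 (drop (index true w2).+1 w2)]
    ++ [seq zw ((index true w1).+1 + (index true w2).+1) ++ v
         | v <- harm_word (drop (index true w1).+1 w1) (drop (index true w2).+1 w2)].
Proof.
move=> h1 h2.
have n1 : w1 != [::] by case: w1 h1.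
have n2 : w2 != [::] by case: w2 h2.
have l1 := size_drop_lt (index true w1) n1.
have l2 := size_drop_lt (index true w2) n2.
rewrite {1}/harm_word stuffle_S // !take_true //.
have -> : (index true w1 + index true w2 + 2 = (index true w1).+1 + (index true w2).+1)%N by lia.
rewrite !stuffle_hw //; rewrite ?size_drop; lia.
Qed.

Lemma good_stuffle n w1 w2 : good w1 -> good w2 -> all good (stuffle n w1 w2).
Proof.
elim: n w1 w2 => [|n IH] w1 w2 g1 g2 //.
have [->|n1] := eqVneq w1 [::]; first by rewrite /= g2.
have [e2|n2] := eqVneq w2 [::]; first by subst; case: w1 g1 n1 => //= ? ? ->.
rewrite stuffle_S // !all_cat !all_map.
have t1 := good_has g1 n1; have t2 := good_has g2 n2.
apply/and3P; split; apply/allP => v vin.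
- have gv := allP (IH _ _ (good_drop _ g1) g2) _ vin.
  by rewrite /preim take_true // inE good_cat // good_zw.
- have gv := allP (IH _ _ g1 (good_drop _ g2)) _ vin.
  by rewrite /preim take_true // inE good_cat // good_zw.
- have gv := allP (IH _ _ (good_drop _ g1) (good_drop _ g2)) _ vin.
  by rewrite /preim inE good_cat // good_zw.
Qed.

Lemma good_hw w1 w2 : good w1 -> good w2 -> all good (harm_word w1 w2).
Proof. exact: good_stuffle. Qed.

Lemma count_nil_hw w1 w2 :
  count_mem [::] (harm_word w1 w2) = ((w1 == [::]) && (w2 == [::])).
Proof.
case: w1 => [|x1 w1]; first by rewrite /harm_word /=; case: w2.
case: w2 => [|x2 w2]; first by [].
rewrite /harm_word stuffle_S // !count_cat !count_map.
rewrite !(@eq_count _ _ pred0) ?count_pred0 //.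
all: by move=> v; rewrite /preim inE /= ?zw_cat; case: (nseq _ _).
Qed.


Lemma count_map_zw a b v' (s : seq word) : (0 < a)%N -> (0 < b)%N ->
  count_mem (zw a ++ v') [seq zw b ++ v | v <- s] = if a == b then count_mem v' s else 0%N.
Proof.
move=> a0 b0; rewrite count_map.
have [<-|ne] := eqVneq a b.
  by apply: eq_count => v; rewrite /preim !inE /= catzw // eqxx.
by rewrite (@eq_count _ _ pred0) ?count_pred0 // => v; rewrite /preim !inE /= catzw // eq_sym (negPf ne).
Qed.

Lemma pre_nil a : (0 < a)%N -> pre a [::] = false.
Proof. by case: a => // a _; rewrite /pre /= /zw; case: a. Qed.

Lemma collapse a c (F : nat -> Qt) : (0 < c)%N ->
  \sum_(1 <= b < a) (if (a - b == c)%N then F b else 0) = if (c < a)%N then F (a - c)%N else 0.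
Proof.
move=> c0.
rewrite (@eq_big_nat _ _ _ 1 a _ (fun b => if b == (a - c)%N then F b else 0)); last first.
  move=> b /andP[b1 ba]; have [e|ne] := eqVneq b (a - c)%N.
    by rewrite e; have -> : (a - (a - c) == c)%N by apply/eqP; lia.
  by have -> : (a - b == c)%N = false by apply/negbTE/eqP; move: ne => /eqP; lia.
rewrite -big_mkcond big_nat1_eq /=.
by case: ifP; case: ifP => //; lia.
Qed.

Lemma cnt_nil_l w2 v : cnt v [::] w2 = (w2 == v)%:R.
Proof. by rewrite /cnt /harm_word /= addn0. Qed.

Lemma cnt_nil_r w1 v : cnt v w1 [::] = (w1 == v)%:R.
Proof. by case: w1 => [|x w1]; rewrite /cnt /harm_word //= addn0. Qed.

Lemma cnt_zw a v' w1 w2 : (0 < a)%N -> good w1 -> good w2 ->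
 cnt (zw a ++ v') w1 w2 =
   (if pre a w1 then cnt v' (drop a w1) w2 else 0)
 + (if pre a w2 then cnt v' w1 (drop a w2) else 0)
 + \sum_(1 <= b < a) (if pre b w1 && pre (a - b) w2
                      then cnt v' (drop b w1) (drop (a - b) w2) else 0).
Proof.
move=> a0 g1 g2.
have [e1|n1] := eqVneq w1 [::].
  subst w1; rewrite pre_nil // add0r big1_seq ?addr0; last first.
    by move=> b /andP[_]; rewrite mem_index_iota => /andP[b1 _]; rewrite pre_nil.
  rewrite cnt_nil_l cat_pre //.
  by case: (pre a w2) => //; rewrite cnt_nil_l.
have [e2|n2] := eqVneq w2 [::].
  subst w2; rewrite (pre_nil a0) addr0 big1_seq ?addr0; last first.
    move=> b /andP[_]; rewrite mem_index_iota => /andP[b1 ba].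
    by rewrite (@pre_nil (a - b)) ?andbF //; lia.
  rewrite cnt_nil_r cat_pre //.
  by case: (pre a w1) => //; rewrite cnt_nil_r.
have t1 := good_has g1 n1; have t2 := good_has g2 n2.
set b1 := (index true w1).+1; set b2 := (index true w2).+1.
have E1 : w1 = zw b1 ++ drop b1 w1 by exact: split_true.
have E2 : w2 = zw b2 ++ drop b2 w2 by exact: split_true.
have P1 : forall b, (0 < b)%N -> pre b w1 = (b == b1) by move=> b b0; rewrite E1 pre_zw.
have P2 : forall b, (0 < b)%N -> pre b w2 = (b == b2) by move=> b b0; rewrite E2 pre_zw.
rewrite /cnt hw_unfold // -/b1 -/b2 !count_cat !count_map_zw // ?addn_gt0 ?orbT //.
rewrite !natrD P1 // P2 //.
rewrite addrA; congr (_ + _ + _).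
- by case: eqP => [->|].
- by case: eqP => [->|].
rewrite (@eq_big_nat _ _ _ 1 a _ (fun b => if (a - b == b2)%N then
           (if b == b1 then cnt v' (drop b1 w1) (drop b2 w2) else 0) else 0)); last first.
  move=> b /andP[b0 ba]; rewrite P1 // P2; last by lia.
  by case: eqP => [->|]; case: eqP => [e|] //= ; rewrite e.
have b10 : (0 < b1)%N by [].
have b20 : (0 < b2)%N by [].
rewrite collapse //.
have -> : (a - b2 == b1)%N = (a == b1 + b2)%N by apply/eqP/eqP; lia.
case: (eqVneq a (b1 + b2)) => [e|ne].
  by rewrite (_ : (b2 < a)%N = true) //; lia.
by case: ifP.
Qed.

Definition D a (f : nc) : nc := [seq (p.1, drop a p.2) | p <- f & pre a p.2].

Lemma big_D a f (F : Qt * word -> Qt) :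
  \sum_(p <- D a f) F p = \sum_(p <- f) (if pre a p.2 then F (p.1, drop a p.2) else 0).
Proof. by rewrite /D big_map big_filter big_mkcond. Qed.

Lemma ncc_D a f w : (0 < a)%N -> coef (D a f) w = coef f (zw a ++ w).
Proof.
move=> a0; rewrite /nc_coef big_D; apply: eq_bigr => p _ /=.
by rewrite cat_pre //; case: (pre a p.2).
Qed.

Definition goodnc (f : nc) := all (fun p => good p.2) f.

Lemma ifmul (c : bool) (x y : Qt) : x * (if c then y else 0) = if c then x * y else 0.
Proof. by case: c; rewrite ?mulr0. Qed.

Lemma hc_D a f g w : (0 < a)%N -> goodnc f -> goodnc g ->
  hc f g (zw a ++ w) = hc (D a f) g w + hc f (D a g) w
     + \sum_(1 <= b < a) hc (D b f) (D (a - b) g) w.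
Proof.
move=> a0 gf gg; rewrite /hc !ncc_harm.
rewrite (@eq_big_seq _ _ _ _ _ _ (fun p => 
   \sum_(q <- g) (if pre a p.2 then p.1 * q.1 * cnt w (drop a p.2) q.2 else 0)
 + \sum_(q <- g) (if pre a q.2 then p.1 * q.1 * cnt w p.2 (drop a q.2) else 0)
 + \sum_(1 <= b < a) \sum_(q <- g) (if pre b p.2 && pre (a - b) q.2
       then p.1 * q.1 * cnt w (drop b p.2) (drop (a - b) q.2) else 0))); last first.
  move=> p pf; rewrite exchange_big /= -!big_split /=; apply: eq_big_seq => q qg.
  rewrite cnt_zw //; last by exact: (allP gg).
    rewrite !mulrDr !ifmul; congr (_ + _ + _); rewrite mulr_sumr; apply: eq_bigr => b _.
    by rewrite ifmul.
  exact: (allP gf).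
rewrite !big_split /=; congr (_ + _ + _).
- by rewrite big_D; apply: eq_bigr => p _; case: (pre a p.2) => //; rewrite big1.
- by apply: eq_bigr => p _; rewrite big_D.
rewrite exchange_big /=; apply: eq_bigr => b _; rewrite ncc_harm big_D; apply: eq_bigr => p _.
rewrite big_D; case: (pre b p.2) => /=; last by rewrite big1.
by apply: eq_bigr => q _.
Qed.


Lemma goodnc_cat f g : goodnc f -> goodnc g -> goodnc (f ++ g).
Proof. by rewrite /goodnc all_cat => -> ->. Qed.

Lemma goodnc_flat (s : seq nc) : all goodnc s -> goodnc (flatten s).
Proof. by elim: s => //= f s IH /andP[gf gs]; apply: goodnc_cat => //; apply: IH. Qed.

Lemma goodnc_scale c f : goodnc f -> goodnc (nc_scale c f).
Proof. by rewrite /goodnc all_map. Qed.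

Lemma goodnc_mul f g : goodnc f -> goodnc g -> goodnc (nc_mul f g).
Proof.
move=> gf gg; rewrite /goodnc /nc_mul; apply/allP => x /allpairsP [[p q] [pf qg ->]] /=.
by apply: good_cat; [exact: (allP gf) | exact: (allP gg)].
Qed.

Lemma goodnc_harm f g : goodnc f -> goodnc g -> goodnc (harm f g).
Proof.
move=> gf gg; rewrite /harm; apply: goodnc_flat; apply/allP => x /allpairsP [[p q] [pf qg ->]] /=.
rewrite /goodnc all_map; apply/allP => v vin /=.
exact: (allP (good_hw (allP gf _ pf) (allP gg _ qg))).
Qed.

Lemma goodnc_one : goodnc nc_one. Proof. by []. Qed.
Lemma goodnc_nil : goodnc nc_zero. Proof. by []. Qed.

Lemma goodnc_Stw w : good w -> goodnc (St_word w).
Proof.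
rewrite /St_word; case: (lastP w) => [|u a] //; rewrite rev_rcons /good last_rcons => ->.
rewrite revK; apply/allP => x /allpairsP [[p q] [pf qg ->]] /=.
by move: qg; rewrite inE /= => /eqP -> /=; apply: good_catr.
Qed.

Lemma goodnc_St f : goodnc f -> goodnc (St f).
Proof.
move=> gf; rewrite /St; apply: goodnc_flat; apply/allP => x /mapP [p pf ->].
by apply: goodnc_scale; apply: goodnc_Stw; exact: (allP gf).
Qed.

Lemma ncc_bad f v : goodnc f -> ~~ good v -> coef f v = 0.
Proof.
move=> gf bv; rewrite /nc_coef big1_seq // => p /andP[_ pf].
by case: eqP => // e; move: (allP gf _ pf); rewrite /= e (negPf bv).
Qed.

Lemma ncc_mul_pre f g u v :
  (forall p, p \in f -> forall x, (p.2 ++ x == u ++ v) = (p.2 == u) && (x == v)) ->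
  coef (nc_mul f g) (u ++ v) = coef f u * coef g v.
Proof.
move=> H; rewrite ncc_mul /nc_coef mulr_suml; apply: eq_big_seq => p pf.
rewrite mulr_sumr; apply: eq_bigr => q _; rewrite H //.
by case: (p.2 == u); case: (q.2 == v); rewrite ?mulr0 ?mul0r.
Qed.

Lemma ncc_mul_nil f g : (forall p, p \in f -> p.2 != [::]) -> coef (nc_mul f g) [::] = 0.
Proof.
move=> H; rewrite ncc_mul big1_seq // => p /andP[_ pf]; rewrite big1 // => q _.
by have := H p pf; case: p.2.
Qed.

Lemma ncc_mul_eqr f g g' v : eqc g g' -> coef (nc_mul f g) v = coef (nc_mul f g') v.
Proof.
move=> e; rewrite !ncc_mul; apply: eq_bigr => p _.
have h : forall g0, \sum_(q <- g0) (if p.2 ++ q.2 == v then p.1 * q.1 else 0)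
   = \sum_(q <- g0) q.1 * (if p.2 ++ q.2 == v then p.1 else 0).
  by move=> g0; apply: eq_bigr => q _; case: ifP; rewrite ?mulr0 // mulrC.
by rewrite !h (lin_sum_eq (fun w => if p.2 ++ w == v then p.1 else 0) e).
Qed.

Lemma ncc_ser_one m v : coef (ser_one m) v = ((m == 0)%N && (v == [::]))%:R.
Proof.
rewrite /ser_one; case: (m == 0)%N; last by rewrite ncc_nil.
by rewrite ncc_cons ncc_nil addr0 /= eq_sym; case: (v == [::]).
Qed.

Definition letters (C : ser) := forall i p, p \in C i -> (0 < size p.2)%N && (p.2 == zw (size p.2)).

Section Geom.
Variable C : ser.
Hypothesis C0 : C 0%N = nc_zero.
Hypothesis HC : letters C.

Notation P := (ser_pow C).

Lemma powS n m : P n.+1 m = flatten [seq nc_mul (C i) (P n (m - i)%N) | i <- iota 0 m.+1].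
Proof. by []. Qed.

Lemma ncc_pow_vanish n m v : (m < n)%N -> coef (P n m) v = 0.
Proof.
elim: n m v => // n IH m v mn; rewrite powS ncc_flatten big1_seq // => i /andP[_].
rewrite mem_iota => /andP[_ im].
case: i im => [|i] im; first by rewrite C0 /nc_mul ncc_nil.
rewrite (@ncc_mul_eqr _ _ nc_zero); first by rewrite ncc_mul big1 // => p _; rewrite big_nil.
move=> w; rewrite IH ?ncc_nil //; lia.
Qed.

Lemma letter_pre i p a x y : (0 < a)%N -> p \in C i ->
  (p.2 ++ x == zw a ++ y) = (p.2 == zw a) && (x == y).
Proof.
move=> a0 pC; have /andP[s0 /eqP e] := HC pC; rewrite e catzw // zw_inj //.
Qed.

Lemma geom_trunc N j v : (j < N)%N ->
  \sum_(n <- iota 0 N) coef (P n j) v = coef (ser_geom C j) v.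
Proof.
move=> jN; rewrite /ser_geom ncc_flatten.
rewrite -(subnKC jN) iotaD big_cat /= [X in _ + X = _]big1_seq ?addr0 // => n /andP[_].
rewrite mem_iota => /andP[h _]; apply: ncc_pow_vanish; lia.
Qed.

Lemma geom_nil m : coef (ser_geom C m) [::] = (m == 0)%N%:R.
Proof.
rewrite /ser_geom ncc_flatten /= big_cons ncc_ser_one eqxx andbT big1_seq ?addr0 //.
move=> n /andP[_]; rewrite mem_iota => /andP[n1 _].
case: n n1 => // n _; rewrite powS ncc_flatten big1 // => i _.
apply: ncc_mul_nil => p pC; have /andP[s0 _] := HC pC; by case: p.2 s0.
Qed.

Lemma geom_zw m a v : (0 < a)%N ->
  coef (ser_geom C m) (zw a ++ v) =
  \sum_(i <- iota 0 m.+1) coef (C i) (zw a) * coef (ser_geom C (m - i)%N) v.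
Proof.
move=> a0.
have L : coef (ser_geom C m) (zw a ++ v) =
   \sum_(n <- iota 0 m) coef (P n.+1 m) (zw a ++ v).
  rewrite /ser_geom ncc_flatten /= big_cons ncc_ser_one.
  have -> : (zw a ++ v == [::]) = false by rewrite zw_cat; case: (nseq _ _).
  by rewrite andbF add0r -(addn0 1%N) iotaDl big_map.
rewrite L.
rewrite (eq_bigr (fun n => \sum_(i <- iota 0 m.+1) coef (C i) (zw a) * coef (P n (m - i)%N) v)); last first.
  move=> n _; rewrite powS ncc_flatten; apply: eq_bigr => i _.
  rewrite ncc_mul_pre // => p pC x.
  exact: (letter_pre x v a0 pC).
rewrite exchange_big; apply: eq_big_seq => i; rewrite mem_iota => /andP[_ im].
rewrite -mulr_sumr; case: i im => [|i] im; first by rewrite C0 ncc_nil !mul0r.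
by rewrite geom_trunc //; lia.
Qed.

Lemma goodnc_pow : (forall i, goodnc (C i)) -> forall n m, goodnc (P n m).
Proof.
move=> gC; elim=> [|n IH] m; first by rewrite /= /ser_one; case: (m == 0)%N.
rewrite powS; apply: goodnc_flat; apply/allP => x /mapP [i _ ->].
exact: goodnc_mul.
Qed.

Lemma goodnc_geom : (forall i, goodnc (C i)) -> forall m, goodnc (ser_geom C m).
Proof.
move=> gC m; apply: goodnc_flat; apply/allP => x /mapP [n _ ->]; exact: goodnc_pow.
Qed.

End Geom.


Lemma word_ind (P : word -> Prop) : P [::] ->
  (forall a v, (0 < a)%N -> P v -> P (zw a ++ v)) ->
  (forall v, ~~ good v -> P v) -> forall v, P v.
Proof.
move=> H0 H1 H2 v; move: {2}(size v) (leqnn (size v)) => n; elim: n v => [|n IH] v sv.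
  by case: v sv.
have [->|nv] := eqVneq v [::]; first by [].
case gv: (good v); last by apply: H2; rewrite gv.
have t := good_has gv nv; rewrite (split_true t); apply: H1 => //; apply: IH.
have := size_drop_lt (index true v) nv; move=> h; rewrite -ltnS; exact: leq_trans h sv.
Qed.

Lemma ncc_assoc f g h v : coef (nc_mul (nc_mul f g) h) v = coef (nc_mul f (nc_mul g h)) v.
Proof.
rewrite !ncc_mul {1}/nc_mul big_allpairs_dep /=; apply: eq_bigr => p _.
rewrite /nc_mul big_allpairs_dep /=; apply: eq_bigr => q _; apply: eq_bigr => r _.
by rewrite catA mulrA.
Qed.

Definition wt (a c : bool) : Qt := if a then (if c then 1 else 'X) else (if c then 0 else 1).

Fixpoint scl (w v : word) : Qt :=
  match w, v with
  | [::], [::] => 1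
  | [:: a], [:: c] => if a == c then 1 else 0
  | a :: ((_ :: _) as w'), c :: v' => wt a c * scl w' v'
  | _, _ => 0
  end.

Lemma scl_cons b W c v : W != [::] -> scl (b :: W) (c :: v) = wt b c * scl W v.
Proof. by case: W. Qed.

Lemma scl_nil_r w : w != [::] -> scl w [::] = 0.
Proof. by case: w => // ? []. Qed.

Lemma scl_nil_l v : scl [::] v = (v == [::])%:R.
Proof. by case: v. Qed.

Lemma scl_single a v : scl [:: a] v = ([:: a] == v)%:R.
Proof. case: v => [|c [|d v]] //=; rewrite eqseq_cons ?andbT ?andbF //; by case: eqP. Qed.

Lemma single_pre (f : nc) c v : (forall p, p \in f -> size p.2 = 1%N) ->
  forall p, p \in f -> forall x, (p.2 ++ x == [:: c] ++ v) = (p.2 == [:: c]) && (x == v).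
Proof.
move=> H p pf x; have := H p pf; case: p.2 => [|d [|]] //= _.
by rewrite !eqseq_cons andbT.
Qed.

Lemma sl_size b p : p \in sigma_letter b -> size p.2 = 1%N.
Proof. case: b; rewrite /sigma_letter !inE; [case/orP => /eqP -> | move=> /eqP ->]; by []. Qed.

Lemma ncc_sl b c : coef (sigma_letter b) [:: c] = wt b c.
Proof. by case: b; case: c; rewrite /sigma_letter /nc_coef /= ?big_cons ?big_nil /= ?addr0 ?add0r. Qed.

Lemma ncc_sigma_mul b X c v :
  coef (nc_mul (sigma_letter b) X) (c :: v) = wt b c * coef X v.
Proof.
rewrite -ncc_sl -(@ncc_mul_pre (sigma_letter b) X [:: c] v) //.
exact: single_pre (@sl_size b).
Qed.

Lemma ncc_sigma_nil b X : coef (nc_mul (sigma_letter b) X) [::] = 0.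
Proof. by apply: ncc_mul_nil => p /sl_size; case: p.2. Qed.

Lemma ncc_Stw w v : coef (St_word w) v = scl w v.
Proof.
case: (lastP w) => [|u a].
  by rewrite scl_nil_l /St_word /= /nc_coef big_cons big_nil addr0 eq_sym; case: eqP.
rewrite /St_word rev_rcons revK.
elim: u v => [|b u IH] v.
  rewrite scl_single /= /nc_coef big_cons big_nil addr0 /= mulr1.
  by case: eqP.
rewrite rcons_cons (_ : sigma_word (b :: u) = nc_mul (sigma_letter b) (sigma_word u)) //.
rewrite ncc_assoc; case: v => [|c v].
  by rewrite ncc_sigma_nil scl_nil_r.
rewrite ncc_sigma_mul IH scl_cons //; by case: u {IH}.
Qed.

Lemma ZK0 n m W w :
  scl (nseq n false ++ true :: W) (nseq m false ++ true :: w) =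
  if (m == n)%N then scl W w
  else if (n < m)%N then 'X * scl W (nseq (m - n).-1 false ++ true :: w) else 0.
Proof.
elim: n m => [|n IH] [|m].
- by case: W => [|d W] /=; [case: w | rewrite mul1r].
- case: W => [|d W] /=; last by [].
  by case: m => [|m] /=; rewrite mulr0.
- rewrite (_ : nseq n.+1 false ++ true :: W = false :: (nseq n false ++ true :: W)) //.
  by rewrite scl_cons /= ?mul0r //; case: (nseq n false).
- rewrite (_ : nseq n.+1 false ++ true :: W = false :: (nseq n false ++ true :: W)) //.
  rewrite (_ : nseq m.+1 false ++ true :: w = false :: (nseq m false ++ true :: w)) //.
  rewrite scl_cons /= ?mul1r ?IH //; last by case: (nseq n false).
Qed.

Section K.
Variable k : nat.
Hypothesis hk : (0 < k)%N.

Definition zp i := flatten (nseq i (zw k)).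

Lemma zpS i : zp i.+1 = zw k ++ zp i. Proof. by []. Qed.

Lemma good_zp i : good (zp i).
Proof. by elim: i => // i IH; rewrite zpS good_cat // good_zw. Qed.

Lemma ZK a W w : (0 < a)%N ->
  scl (zw k ++ W) (zw a ++ w) =
  if (a == k)%N then scl W w else if (k < a)%N then 'X * scl W (zw (a - k) ++ w) else 0.
Proof.
move=> a0; rewrite !zw_cat ZK0.
have -> : (a.-1 == k.-1)%N = (a == k)%N by apply/eqP/eqP; lia.
have -> : (k.-1 < a.-1)%N = (k < a)%N by lia.
by have -> : (a.-1 - k.-1).-1 = (a - k).-1 by lia.
Qed.

Lemma SWa i p w : (0 < p)%N ->
  scl (zp i) (zw (p * k) ++ w) = if (p <= i)%N then 'X ^+ p.-1 * scl (zp (i - p)) w else 0.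
Proof.
elim: i p => [|i IH] p p0.
  rewrite (_ : zp 0 = [::]) // scl_nil_l; have -> : (p <= 0)%N = false by lia.
  by rewrite zw_cat; case: (nseq _ _).
rewrite zpS ZK; last by rewrite muln_gt0 p0.
case: (eqVneq p 1%N) => [->|p1].
  by rewrite mul1n eqxx expr0 mul1r subSS subn0.
have -> : (p * k == k)%N = false by apply/negbTE; apply/eqP => e; move: p1 => /eqP; nia.
have -> : (k < p * k)%N by nia.
have -> : (p * k - k = p.-1 * k)%N by case: p p0 {p1 IH} => // p _; rewrite mulSn addKn.
rewrite IH; last by lia.
have -> : (p.-1 <= i)%N = (p <= i.+1)%N by lia.
case: ifP => _; last by rewrite mulr0.
rewrite mulrA -exprS.
have -> : p.-2.+1 = p.-1 by lia.
by have -> : (i - p.-1 = i.+1 - p)%N by lia.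
Qed.

Lemma SWb i a w : (0 < a)%N -> ~~ (k %| a)%N -> scl (zp i) (zw a ++ w) = 0.
Proof.
elim: i a => [|i IH] a a0 nd.
  by rewrite (_ : zp 0 = [::]) // scl_nil_l zw_cat; case: (nseq _ _).
rewrite zpS ZK //.
have -> : (a == k)%N = false by apply/negbTE; apply: contraNneq nd => ->; exact: dvdnn.
case: ifP => // ka; rewrite IH ?mulr0 //; first by lia.
apply: contra nd => h; have -> : a = (a - k + k)%N by lia.
by rewrite dvdn_add // dvdnn.
Qed.

End K.


Lemma iota_idx m : iota 0 m = index_iota 0 m.
Proof. by rewrite /index_iota subn0. Qed.

Lemma sum_iota1 (F : nat -> Qt) j m :
  \sum_(i <- iota 0 m.+1) (if i == j then F i else 0) = if (j <= m)%N then F j else 0.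
Proof. by rewrite -big_mkcond iota_idx big_nat1_eq /= ltnS. Qed.

Lemma reidx q n (F : nat -> nat -> Qt) :
  \sum_(i <- iota 0 n.+1) (if (q <= i)%N then F (i - q)%N (n - i)%N else 0) =
  if (q <= n)%N then \sum_(i <- iota 0 (n - q).+1) F i (n - q - i)%N else 0.
Proof.
rewrite !iota_idx; case: leqP => qn.
  rewrite (@big_cat_nat _ _ _ q) //=; last by lia.
  rewrite big1_seq ?add0r; last first.
    by move=> i /andP[_]; rewrite mem_index_iota => /andP[_ iq]; rewrite leqNgt iq.
  rewrite -{1}(add0n q) big_addn.
  have -> : (n.+1 - q = (n - q).+1)%N by lia.
  apply: eq_bigr => i _; rewrite leq_addl addnK; congr F; lia.
rewrite big1_seq // => i /andP[_]; rewrite mem_index_iota => /andP[_ iq].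
by have -> : (q <= i)%N = false by lia.
Qed.

Lemma reidx1 n (G : nat -> nat -> Qt) :
  \sum_(i <- iota 0 n.+1) (if (0 < n - i)%N then G i (n - i - 1)%N else 0) =
  if n is n'.+1 then \sum_(i <- iota 0 n) G i (n' - i)%N else 0.
Proof.
case: n => [|n]; first by rewrite big_cons big_nil /= addr0.
rewrite !iota_idx big_nat_recr //= subnn /= addr0.
apply: eq_big_nat => i /andP[_ ilt].
have -> : (0 < n.+1 - i)%N by lia.
congr G; lia.
Qed.

Section Main.
Variable k : nat.
Hypothesis hk : (0 < k)%N.

Definition Zs : ser := fun i => if i == 1%N then z k else nc_zero.
Definition Ys : ser := fun i => if i == 1%N then nc_scale (-1) (z k) else nc_zero.
Definition Cs : ser := fun i => if (2 <= i)%N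
                        then nc_scale ('X ^+ (i - 2) * ('X - 1)) (z (i * k))
                        else nc_zero.

Lemma letters_z (c : Qt) n p : (0 < n)%N -> p \in nc_scale c (z n) -> (0 < size p.2)%N && (p.2 == zw (size p.2)).
Proof. by move=> n0; rewrite inE => /eqP -> /=; rewrite size_zw // n0 eqxx. Qed.

Lemma letters_Zs : letters Zs.
Proof.
move=> i p; rewrite /Zs; case: (i == 1%N) => //.
by rewrite inE => /eqP -> /=; rewrite size_zw // hk eqxx.
Qed.

Lemma letters_Ys : letters Ys.
Proof. move=> i p; rewrite /Ys; case: (i == 1%N) => //; exact: letters_z. Qed.

Lemma letters_Cs : letters Cs.
Proof.
move=> i p; rewrite /Cs; case: ifP => // i2; apply: letters_z.
by rewrite muln_gt0 hk andbT; lia.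
Qed.

Lemma goodnc_z (c : Qt) n : goodnc (nc_scale c (z n)).
Proof. by rewrite /goodnc /= good_zw. Qed.

Lemma good_Zs i : goodnc (Zs i).
Proof. by rewrite /Zs; case: ifP => // _; rewrite /goodnc /= good_zw. Qed.
Lemma good_Ys i : goodnc (Ys i).
Proof. by rewrite /Ys; case: ifP => // _; exact: goodnc_z. Qed.
Lemma good_Cs i : goodnc (Cs i).
Proof. by rewrite /Cs; case: ifP => // _; exact: goodnc_z. Qed.

Lemma ncc_z n a : (0 < n)%N -> (0 < a)%N -> coef (z n) (zw a) = (a == n)%:R.
Proof.
move=> n0 a0; rewrite /z /nc_word /nc_coef big_cons big_nil addr0 /= zw_inj //.
by rewrite eq_sym; case: eqP.
Qed.

Lemma geomZ m v : coef (ser_geom Zs m) v = (v == zp k m)%:R.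
Proof.
elim/word_ind: v m => [m|a v a0 IH m|v bv m].
- rewrite geom_nil //; last exact: letters_Zs.
  case: m => [|m]; first by rewrite eqxx.
  by rewrite zpS zw_cat; case: (nseq _ _).
- rewrite geom_zw //; last exact: letters_Zs.
  rewrite (eq_bigr (fun i => if i == 1%N then (a == k)%:R * coef (ser_geom Zs (m - i)%N) v else 0)); last first.
    by move=> i _; rewrite /Zs; case: eqP => _; rewrite ?ncc_z // ncc_nil mul0r.
  rewrite sum_iota1 IH; case: m => [|m] /=.
    by rewrite zw_cat; case: (nseq _ _).
  by rewrite zpS catzw // subn1 /= -natrM mulnb.
- rewrite ncc_bad //; last by apply: goodnc_geom => i; exact: good_Zs.
  by case: eqP => // e; move: bv; rewrite e good_zp.
Qed.

Definition A i := St (ser_geom Zs i).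
Definition B j := ser_geom Ys j.

Lemma good_A i : goodnc (A i).
Proof. apply: goodnc_St; apply: goodnc_geom => j; exact: good_Zs. Qed.
Lemma good_B j : goodnc (B j).
Proof. apply: goodnc_geom => i; exact: good_Ys. Qed.

Lemma coefA i v : coef (A i) v = scl (zp k i) v.
Proof.
rewrite /A ncc_St.
rewrite (@lin_sum_eq _ (nc_word (zp k i)) (fun w => coef (St_word w) v)).
  by rewrite big_cons big_nil addr0 mul1r ncc_Stw.
move=> w; rewrite geomZ /nc_word /nc_coef big_cons big_nil addr0 /= eq_sym.
by case: eqP.
Qed.

Lemma coefA_nil i : coef (A i) [::] = (i == 0)%N%:R.
Proof.
rewrite coefA; case: i => [|i] //; rewrite scl_nil_r //.
by rewrite zpS zw_cat; case: (nseq _ _).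
Qed.

Lemma DA1 i p : (0 < p)%N -> eqc (D (p * k) (A i))
  (if (p <= i)%N then nc_scale ('X ^+ p.-1) (A (i - p)) else nc_zero).
Proof.
move=> p0 w; rewrite ncc_D ?muln_gt0 ?p0 // coefA SWa //.
by case: ifP => _; rewrite ?ncc_scale ?coefA ?ncc_nil.
Qed.

Lemma DA2 i a : (0 < a)%N -> ~~ (k %| a)%N -> eqc (D a (A i)) nc_zero.
Proof. by move=> a0 nd w; rewrite ncc_D // coefA SWb // ncc_nil. Qed.

Lemma coefB_nil j : coef (B j) [::] = (j == 0)%N%:R.
Proof. by rewrite /B geom_nil //; exact: letters_Ys. Qed.

Lemma DB a j : (0 < a)%N -> eqc (D a (B j))
  (if (a == k) && (0 < j)%N then nc_scale (-1) (B (j - 1)) else nc_zero).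
Proof.
move=> a0 w; rewrite ncc_D // /B geom_zw //; last exact: letters_Ys.
rewrite (eq_bigr (fun i => if i == 1%N then
     (-1 * (a == k)%:R) * coef (ser_geom Ys (j - i)%N) w else 0)); last first.
  by move=> i _; rewrite /Ys; case: eqP => _; rewrite ?ncc_scale ?ncc_z // ncc_nil mul0r.
rewrite sum_iota1; case: (a == k); case: j => [|j] //=; rewrite ?ncc_nil ?mulr0 ?mul0r //.
by rewrite mulr1 ncc_scale.
Qed.

Lemma hc_ifl (c : bool) x F G w : hc (if c then nc_scale x F else nc_zero) G w =
  if c then x * hc F G w else 0.
Proof. by case: c; rewrite ?hc_scalel ?hc_nill. Qed.

Lemma hc_ifr (c : bool) x F G w : hc F (if c then nc_scale x G else nc_zero) w =
  if c then x * hc F G w else 0.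
Proof. by case: c; rewrite ?hc_scaler ?hc_nilr. Qed.


Lemma hcA_zw i j p w : (0 < p)%N -> hc (A i) (B j) (zw (p * k) ++ w) =
  (if (p <= i)%N then 'X ^+ p.-1 * hc (A (i - p)) (B j) w else 0)
  + (if (p == 1%N) && (0 < j)%N then -1 * hc (A i) (B (j - 1)) w else 0)
  + (if (2 <= p)%N then (if (0 < j)%N then (if (p.-1 <= i)%N then
        -1 * ('X ^+ p.-2 * hc (A (i - p.-1)) (B (j - 1)) w) else 0) else 0) else 0).
Proof.
move=> p0; have a0 : (0 < p * k)%N by rewrite muln_gt0 p0.
rewrite hc_D //; try exact: good_A; try exact: good_B.
rewrite (hc_eql _ _ (DA1 i p0)) hc_ifl (hc_eqr _ _ (DB j a0)) hc_ifr.
have -> : (p * k == k) = (p == 1%N) by apply/eqP/eqP; nia.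
congr (_ + _ + _).
rewrite (@eq_big_nat _ _ _ 1 (p * k) _ (fun b => if (p * k - b == k)%N then
   (if (0 < j)%N then -1 * hc (D b (A i)) (B (j - 1)) w else 0) else 0)); last first.
  move=> b /andP[b1 bp]; rewrite (hc_eqr _ _ (DB j _)); last by lia.
  by rewrite hc_ifr; case: (_ == k).
rewrite collapse //.
have -> : (k < p * k)%N = (2 <= p)%N by apply/idP/idP; nia.
case: ifP => // p2; case: ifP => // j0.
have -> : (p * k - k = p.-1 * k)%N by clear -p0; case: p p0 => // p _; rewrite mulSn addKn.
rewrite (hc_eql _ _ (DA1 i (_ : (0 < p.-1)%N))); last by lia.
by rewrite hc_ifl; case: ifP => _; rewrite ?mulr0 // mulrA.
Qed.


Definition Lf m w := \sum_(i <- iota 0 m.+1) hc (A i) (B (m - i)%N) w.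

Lemma Lrec1 m p w : (0 < p)%N -> Lf m (zw (p * k) ++ w) =
  if (p <= m)%N then (if (2 <= p)%N then 'X ^+ (p - 2) * ('X - 1) else 0) * Lf (m - p) w else 0.
Proof.
move=> p0; rewrite /Lf (eq_bigr _ (fun i _ => hcA_zw i (m - i) w p0)) !big_split /=.
rewrite (reidx p m (fun x y => 'X ^+ p.-1 * hc (A x) (B y) w)).
have E2 : \sum_(i <- iota 0 m.+1)
   (if (p == 1%N) && (0 < m - i)%N then -1 * hc (A i) (B (m - i - 1)) w else 0) =
   if p == 1%N then (if m is m'.+1 then - Lf m' w else 0) else 0.
  case: eqP => _ /=; last by rewrite big1.
  rewrite (reidx1 m (fun x y => -1 * hc (A x) (B y) w)); case: m => // m.
  by rewrite /Lf -sumrN; apply: eq_bigr => i _; rewrite mulN1r.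
have E3 : \sum_(i <- iota 0 m.+1)
   (if (2 <= p)%N then (if (0 < m - i)%N then (if (p.-1 <= i)%N then
        -1 * ('X ^+ p.-2 * hc (A (i - p.-1)) (B (m - i - 1)) w) else 0) else 0) else 0) =
   if (2 <= p)%N && (p <= m)%N then - ('X ^+ p.-2 * Lf (m - p) w) else 0.
  case: (leqP 2 p) => p2 /=; last by rewrite big1.
  rewrite (reidx1 m (fun x y => if (p.-1 <= x)%N then
        -1 * ('X ^+ p.-2 * hc (A (x - p.-1)) (B y) w) else 0)).
  clear E2; case: m => [|m]; first by have -> : (p <= 0)%N = false by lia.
  rewrite (reidx p.-1 m (fun x y => -1 * ('X ^+ p.-2 * hc (A x) (B y) w))).
  have -> : (p.-1 <= m)%N = (p <= m.+1)%N by lia.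
  case: ifP => // _.
  have -> : (m - p.-1 = m.+1 - p)%N by lia.
  by rewrite /Lf mulr_sumr -sumrN; apply: eq_bigr => i _; rewrite mulN1r.
rewrite E2 E3 {E2 E3}.
have E1 : \sum_(i <- iota 0 (m - p).+1) 'X ^+ p.-1 * hc (A i) (B (m - p - i)) w
   = 'X ^+ p.-1 * Lf (m - p) w by rewrite /Lf mulr_sumr.
rewrite E1 {E1}; case: (leqP p m) => pm.
  have [p1|p1] := eqVneq p 1%N.
    subst p; case: m pm => // m _ /=; rewrite expr0 mul1r subn1 /= addr0 addrN.
    by rewrite mul0r.
  have p2 : (2 <= p)%N by lia.
  rewrite [X in _ = _ * X](_ : _ = Lf (m - p) w) // andbT p2 addr0.
  have -> : p.-2 = (p - 2)%N by lia.
  have -> : p.-1 = (p - 2).+1 by lia.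
  by rewrite exprS mulrBr mulr1 mulrBl (mulrC (GRing.exp _ _) (polyX _)).
rewrite andbF addr0 add0r.
have [p1|p1] := eqVneq p 1%N; last by [].
by subst p; case: m pm.
Qed.

Lemma Lrec2 m a w : (0 < a)%N -> ~~ (k %| a)%N -> Lf m (zw a ++ w) = 0.
Proof.
move=> a0 nd; rewrite /Lf big1 // => i _.
rewrite hc_D //; try exact: good_A; try exact: good_B.
rewrite (hc_eql _ _ (DA2 i a0 nd)) hc_nill add0r.
rewrite (hc_eqr _ _ (DB _ a0)) hc_ifr.
have -> : (a == k) = false by apply/negbTE; apply: contraNneq nd => ->; exact: dvdnn.
rewrite add0r big1_seq // => b /andP[_]; rewrite mem_index_iota => /andP[b1 ba].
rewrite (hc_eqr _ _ (DB _ (_ : (0 < a - b)%N))); last by lia.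
rewrite hc_ifr; case: eqP => // e /=.
rewrite (hc_eql _ _ (DA2 i (_ : (0 < b)%N) _)) ?hc_nill ?mulr0 //.
  by case: ifP.
move: nd; apply: contra => h; have -> : a = (b + k)%N by lia.
by rewrite dvdn_add // dvdnn.
Qed.

Lemma hc_nil f g : hc f g [::] = coef f [::] * coef g [::].
Proof.
rewrite /hc ncc_harm /nc_coef mulr_suml; apply: eq_bigr => p _.
rewrite mulr_sumr; apply: eq_bigr => q _; rewrite /cnt count_nil_hw.
by case: (p.2 == [::]); case: (q.2 == [::]); rewrite ?mulr1 ?mulr0 ?mul0r.
Qed.

Lemma Lnil m : Lf m [::] = (m == 0)%N%:R.
Proof.
rewrite /Lf (eq_bigr (fun i => if i == 0%N then (m == 0)%N%:R else 0)); last first.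
  move=> i _; rewrite hc_nil coefA_nil coefB_nil.
  by case: eqP => [->|_]; rewrite ?mul0r // mul1r subn0.
by rewrite sum_iota1.
Qed.

Lemma Lbad m v : ~~ good v -> Lf m v = 0.
Proof.
move=> bv; rewrite /Lf big1 // => i _; rewrite /hc ncc_bad //.
by apply: goodnc_harm; [exact: good_A | exact: good_B].
Qed.

Lemma ncc_Cs i a : (0 < a)%N -> coef (Cs i) (zw a) =
  if (2 <= i)%N then 'X ^+ (i - 2) * ('X - 1) * (a == i * k)%N%:R else 0.
Proof.
move=> a0; rewrite /Cs; case: ifP => i2; last by rewrite ncc_nil.
by rewrite ncc_scale ncc_z // muln_gt0 hk andbT; lia.
Qed.

Lemma Rrec1 m p w : (0 < p)%N -> coef (ser_geom Cs m) (zw (p * k) ++ w) =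
  if (p <= m)%N then (if (2 <= p)%N then 'X ^+ (p - 2) * ('X - 1) else 0)
     * coef (ser_geom Cs (m - p)%N) w else 0.
Proof.
move=> p0; have HC := letters_Cs; rewrite geom_zw //; last by rewrite muln_gt0 p0.
rewrite (eq_bigr (fun i => if i == p then (if (2 <= i)%N then 'X ^+ (i - 2) * ('X - 1) else 0)
     * coef (ser_geom Cs (m - i)%N) w else 0)); first by rewrite sum_iota1.
move=> i _; rewrite ncc_Cs ?muln_gt0 ?p0 //.
have -> : (p * k == i * k)%N = (i == p) by rewrite eqn_mul2r (negPf (lt0n_neq0 hk)) /= eq_sym.
by case: eqP => _; case: ifP; rewrite ?mulr1 ?mulr0 ?mul0r.
Qed.

Lemma Rrec2 m a w : (0 < a)%N -> ~~ (k %| a)%N -> coef (ser_geom Cs m) (zw a ++ w) = 0.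
Proof.
move=> a0 nd; rewrite geom_zw //; last exact: letters_Cs.
rewrite big1 // => i _; rewrite ncc_Cs //; case: ifP => _ //.
have -> : (a == i * k)%N = false by apply/negbTE; apply: contra nd => /eqP ->; exact: dvdn_mull.
all: by rewrite ?mulr0 mul0r.
Qed.

Lemma Rnil m : coef (ser_geom Cs m) [::] = (m == 0)%N%:R.
Proof. by rewrite geom_nil //; exact: letters_Cs. Qed.

Lemma Rbad m v : ~~ good v -> coef (ser_geom Cs m) v = 0.
Proof. by move=> bv; rewrite ncc_bad //; apply: goodnc_geom => i; exact: good_Cs. Qed.

Lemma LR m v : Lf m v = coef (ser_geom Cs m) v.
Proof.
elim/word_ind: v m => [m|a v a0 IH m|v bv m].
- by rewrite Lnil Rnil.
- case: (boolP (k %| a)%N) => [/dvdnP [p E]|nd]; last by rewrite Lrec2 ?Rrec2.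
  subst a.
  have p0 : (0 < p)%N by move: a0; rewrite muln_gt0; case/andP.
  by rewrite Lrec1 // Rrec1 // IH.
- by rewrite Lbad ?Rbad.
Qed.

End Main.

Theorem main (k : nat) (hk : (0 < k)%N) :
  ser_eq
    (ser_harm
       (ser_St (ser_geom (fun i => if i == 1%N then z k else nc_zero)))
       (ser_geom (fun i => if i == 1%N then nc_scale (-1) (z k) else nc_zero)))
    (ser_geom (fun i => if (2 <= i)%N
                        then nc_scale ('X ^+ (i - 2) * ('X - 1)) (z (i * k))
                        else nc_zero)).
Proof.
move=> m v; rewrite /ser_harm /ser_prod ncc_flatten.
exact: (LR hk m v).
Qed.


Theorem proposition4p8 (k : nat) (hk : (0 < k)%N) :
  ser_eq
    (ser_harm
       (ser_St (ser_geom (fun i => if i == 1%N then z k else nc_zero)))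
       (ser_geom (fun i => if i == 1%N then nc_scale (-1) (z k) else nc_zero)))
    (ser_geom (fun i => if (2 <= i)%N
                        then nc_scale ('X ^+ (i - 2) * ('X - 1)) (z (i * k))
                        else nc_zero)).
Proof. exact: main hk. Qed.
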